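(* Let $(V,\nu,\tau,\tau^* )$ be a PN space in which $\nu(V)\subseteq D^+$ and $D^+$ is invariant under $\tau$, i.e. $\tau(D^+\times D^+)\subseteq D^+$. If $(p_m)$ is a sequence in $V$ strongly converging to $p\in V$ and $A=\{p_m: m\in\mathbb{N}\}$, then $A$ is a $D$-bounded subset of $V$.
   Context: $\Delta^{+}$ is the set of functions $F:[-\infty,+\infty]\to[0,1]$ that are left-continuous on $\mathbb{R}$, nondecreasing, with $F(0)=0$ and $F(+\infty)=1$, ordered pointwise; $D^{+}=\{F\in\Delta^{+}: l^{-}F(+\infty)=1\}$, where $l^{-}f(x)=\lim_{t\to x^{-}}f(t)$. $\varepsilon_0$ is the d.f. equal to $0$ for $x\le0$ and $1$ for $x>0$. A triangle function is a map $\tau:\Delta^+\times\Delta^+\to\Delta^+$ that is associative, commutative, nondecreasing in each argument, with unit $\varepsilon_0$. A PN space is a quadruple $(V,\nu,\tau,\tau^* )$ with $V$ a real vector space, $\tau\le\tau^*$ continuous triangle functions, and $\nu:V\to\Delta^+$ such that for all $p,q\in V$: (N1) $\nu_p=\varepsilon_0$ iff $p=\theta$; (N2) $\nu_{-p}=\nu_p$; (N3) $\nu_{p+q}\ge\tau(\nu_p,\nu_q)$; (N4) $\nu_p\le\tau^*(\nu_{\lambda p},\nu_{(1-\lambda)p})$ for all $\lambda\in[0,1]$. A sequence $(p_m)$ strongly converges to $p$ if for every $\lambda>0$ there is $N$ with $\nu_{p_m-p}(\lambda)>1-\lambda$ for $m\ge N$. For nonempty $A\subseteq V$, $R_A(x)=l^{-}\inf\{\nu_q(x):q\in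 A\}$ for $x\in[0,+\infty)$ and $R_A(+\infty)=1$; $A$ is $D$-bounded if $R_A\in D^+$. *)

(* Defs.v *)
From Stdlib Require Import Reals Lra.
From Coquelicot Require Import Coquelicot.
Open Scope R_scope.

(* A distance distribution function on the extended reals [-oo,+oo]. *)
Definition dfun := Rbar -> R.

Definition dle (F G : dfun) : Prop := forall x : Rbar, F x <= G x.
Definition deq (F G : dfun) : Prop := forall x : Rbar, F x = G x.

Definition in_Delta (F : dfun) : Prop :=
  (forall x : Rbar, 0 <= F x <= 1) /\
  (forall x y : Rbar, Rbar_le x y -> F x <= F y) /\
  (forall x : R, filterlim (fun t : R => F (Finite t)) (at_left x) (locally (F (Finite x)))) /\
  F (Finite 0) = 0 /\
  F p_infty = 1.

Definition in_Dplus (F : dfun) : Prop :=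
  in_Delta F /\
  filterlim (fun t : R => F (Finite t)) (Rbar_locally p_infty) (locally 1).

Definition eps0 : dfun := fun x =>
  match x with
  | Finite r => if Rle_dec r 0 then 0 else 1
  | p_infty => 1
  | m_infty => 0
  end.

(* Weak convergence in Delta^+ (convergence at every continuity point of the
   limit); on Delta^+ it is the convergence of the modified Levy metric. *)
Definition weak_cv (Fn : nat -> dfun) (F : dfun) : Prop :=
  forall x : R, continuous (fun t : R => F (Finite t)) x ->
    filterlim (fun n => Fn n (Finite x)) eventually (locally (F (Finite x))).

Definition triangle_function (tau : dfun -> dfun -> dfun) : Prop :=
  (forall F G, in_Delta F -> in_Delta G -> in_Delta (tau F G)) /\
  (forall F G H, in_Delta F -> in_Delta G -> in_Delta H ->
      deq (tau (tau F G) H) (tau F (tau G H))) /\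
  (forall F G, in_Delta F -> in_Delta G -> deq (tau F G) (tau G F)) /\
  (forall F F' G, in_Delta F -> in_Delta F' -> in_Delta G -> dle F F' ->
      dle (tau F G) (tau F' G)) /\
  (forall F, in_Delta F -> deq (tau F eps0) F).

(* Continuity of a triangle function w.r.t. the (metrizable) topology of
   weak convergence on Delta^+ ; stated sequentially. *)
Definition tf_continuous (tau : dfun -> dfun -> dfun) : Prop :=
  forall (Fn Gn : nat -> dfun) (F G : dfun),
    (forall n, in_Delta (Fn n)) -> (forall n, in_Delta (Gn n)) ->
    in_Delta F -> in_Delta G ->
    weak_cv Fn F -> weak_cv Gn G ->
    weak_cv (fun n => tau (Fn n) (Gn n)) (tau F G).

Definition PN_space (V : ModuleSpace R_Ring) (nu : V -> dfun)
    (tau tau_star : dfun -> dfun -> dfun) : Prop :=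
  triangle_function tau /\ tf_continuous tau /\
  triangle_function tau_star /\ tf_continuous tau_star /\
  (forall F G, in_Delta F -> in_Delta G -> dle (tau F G) (tau_star F G)) /\
  (forall p : V, in_Delta (nu p)) /\
  (forall p : V, deq (nu p) eps0 <-> p = zero) /\
  (forall p : V, deq (nu (opp p)) (nu p)) /\
  (forall p q : V, dle (tau (nu p) (nu q)) (nu (plus p q))) /\
  (forall (p : V) (l : R), 0 <= l <= 1 ->
      dle (nu p) (tau_star (nu (scal l p)) (nu (scal (1 - l) p)))).

Definition strongly_converges (V : ModuleSpace R_Ring) (nu : V -> dfun)
    (pm : nat -> V) (p : V) : Prop :=
  forall l : R, 0 < l -> exists N : nat, forall m : nat, (N <= m)%nat ->
    nu (minus (pm m) p) (Finite l) > 1 - l.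

Definition inf_nu (V : ModuleSpace R_Ring) (nu : V -> dfun) (A : V -> Prop)
    (x : R) : R :=
  real (Glb_Rbar (fun y => exists q, A q /\ y = nu q (Finite x))).

(* R is the probabilistic radius R_A: R_A(x) = l^- inf_nu(x) for x in [0,+oo),
   R_A(+oo) = 1, and (convention) R_A = 0 on [-oo,0). *)
Definition is_radius (V : ModuleSpace R_Ring) (nu : V -> dfun) (A : V -> Prop)
    (RA : dfun) : Prop :=
  (forall x : R, 0 <= x ->
     filterlim (inf_nu V nu A) (at_left x) (locally (RA (Finite x)))) /\
  RA p_infty = 1 /\
  (forall x : R, x < 0 -> RA (Finite x) = 0) /\
  RA m_infty = 0.

Definition D_bounded (V : ModuleSpace R_Ring) (nu : V -> dfun) (A : V -> Prop) : Prop :=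
  (exists q, A q) /\ exists RA, is_radius V nu A RA /\ in_Dplus RA.

(* Main.v *)
Require Import Defs.
From Stdlib Require Import Reals Lra Lia Classical.
From Coquelicot Require Import Coquelicot.
Open Scope R_scope.

Lemma ballR (x e y : R) : ball x e y <-> Rabs (y - x) < e.
Proof. unfold ball; simpl. unfold AbsRing_ball, abs, minus, plus, opp; simpl. unfold Rminus. tauto. Qed.

Lemma lim_left (f : R -> R) x y :
  (forall eps, 0 < eps -> exists d, 0 < d /\ forall t, x - d < t < x -> Rabs (f t - y) < eps) ->
  filterlim f (at_left x) (locally y).
Proof.
  intros H. apply filterlim_locally. intros eps.
  destruct (H eps (cond_pos eps)) as [d [Hd Hf]].
  exists (mkposreal d Hd). intros t Ht Hlt. apply ballR. apply Hf.
  assert (Hb : Rabs (t - x) < d) by (apply ballR; exact Ht). destruct (Rabs_def2 _ _ Hb). lra.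
Qed.

Lemma lim_seq_get (u : nat -> R) l : filterlim u eventually (locally l) ->
  forall eps, 0 < eps -> exists N, forall n, (N <= n)%nat -> Rabs (u n - l) < eps.
Proof.
  intros H eps He. apply filterlim_locally with (eps := mkposreal eps He) in H.
  destruct H as [N HN]. exists N. intros n Hn. apply HN. exact Hn.
Qed.

Definition step (a c : R) : dfun := fun x =>
  match x with
  | Finite r => if Rle_dec r a then 0 else c
  | p_infty => 1
  | m_infty => 0
  end.

Lemma step_Delta a c : 0 <= a -> 0 <= c <= 1 -> in_Delta (step a c).
Proof.
  intros Ha Hc. split; [|split; [|split; [|split]]].
  - intros [r| |]; simpl; try destruct Rle_dec; lra.
  - intros [x| |] [y| |] Hxy; simpl in *; try contradiction;
      repeat destruct Rle_dec; lra.
  - intros x. apply lim_left. intros eps He.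
    destruct (Rle_dec x a).
    + exists 1. split; [lra|]. intros t Ht. simpl.
      destruct (Rle_dec t a), (Rle_dec x a); try lra.
      replace (0 - 0) with 0 by ring. rewrite Rabs_R0; lra.
    + exists (x - a). split; [lra|]. intros t Ht. simpl.
      destruct (Rle_dec t a), (Rle_dec x a); try lra.
      replace (c - c) with 0 by ring. rewrite Rabs_R0; lra.
  - simpl. destruct Rle_dec; lra.
  - reflexivity.
Qed.

Lemma eps0_step : eps0 = step 0 1.
Proof. reflexivity. Qed.

Lemma Dplus_eventually F : in_Dplus F -> forall eps, 0 < eps ->
  exists M, forall t, M < t -> 1 - eps < F (Finite t).
Proof.
  intros [_ H] eps He. apply filterlim_locally with (eps := mkposreal eps He) in H.
  destruct H as [M HM]. exists M. intros t Ht. specialize (HM t Ht).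
  assert (Hb : Rabs (F (Finite t) - 1) < eps) by (apply (ballR 1 (mkposreal eps He)); exact HM). destruct (Rabs_def2 _ _ Hb). lra.
Qed.

Lemma Delta_mono F x y : in_Delta F -> x <= y -> F (Finite x) <= F (Finite y).
Proof. intros [_ [H _]] Hxy. apply H. exact Hxy. Qed.

Lemma Delta_bnd F x : in_Delta F -> 0 <= F x <= 1.
Proof. intros [H _]. apply H. Qed.

Lemma Delta_nonpos F x : in_Delta F -> x <= 0 -> F (Finite x) = 0.
Proof.
  intros HF Hx. pose proof (Delta_mono F x 0 HF Hx).
  destruct HF as [Hb [_ [_ [H0 _]]]]. specialize (Hb (Finite x)). lra.
Qed.

Lemma Delta_pinf F : in_Delta F -> F p_infty = 1.
Proof. intros [_ [_ [_ [_ H]]]]. exact H. Qed.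

Lemma glb_props (V : ModuleSpace R_Ring) (nu : V -> dfun) (A : V -> Prop) x q0 :
  (forall q, in_Delta (nu q)) -> A q0 ->
  0 <= inf_nu V nu A x <= 1 /\
  (forall q, A q -> inf_nu V nu A x <= nu q (Finite x)) /\
  (forall b, (forall q, A q -> b <= nu q (Finite x)) -> b <= inf_nu V nu A x).
Proof.
  intros HD Hq0. unfold inf_nu.
  set (E := fun y => exists q, A q /\ y = nu q (Finite x)).
  destruct (Glb_Rbar_correct E) as [Hlb Hglb].
  assert (H0 : Rbar_le 0 (Glb_Rbar E)).
  { apply Hglb. intros y [q [Hq ->]]. simpl. apply (Delta_bnd _ _ (HD q)). }
  assert (H1 : Rbar_le (Glb_Rbar E) (nu q0 (Finite x))).
  { apply Hlb. exists q0. split; auto. }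
  destruct (Glb_Rbar E) as [r| |] eqn:Er; simpl in H0, H1; try contradiction.
  simpl. pose proof (Delta_bnd _ (Finite x) (HD q0)).
  split; [lra|]. split.
  - intros q Hq. assert (Hl : Rbar_le r (nu q (Finite x))).
    { apply Hlb. exists q. split; auto. }
    exact Hl.
  - intros b Hb. assert (Hl : Rbar_le b r).
    { apply Hglb. intros y [q [Hq ->]]. simpl. apply Hb; auto. }
    exact Hl.
Qed.

Definition sup_g (f : R -> R) (x : R) : R :=
  real (Lub_Rbar (fun y => exists t, t < x /\ y = f t)).

Lemma lub_props f x : (forall t, 0 <= f t <= 1) ->
  0 <= sup_g f x <= 1 /\ (forall t, t < x -> f t <= sup_g f x) /\
  (forall b, (forall t, t < x -> f t <= b) -> sup_g f x <= b).
Proof.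
  intros Hf. unfold sup_g.
  set (E := fun y => exists t, t < x /\ y = f t).
  destruct (Lub_Rbar_correct E) as [Hub Hlub].
  assert (H0 : Rbar_le (f (x - 1)) (Lub_Rbar E)).
  { apply Hub. exists (x - 1). split; [lra|auto]. }
  assert (H1 : Rbar_le (Lub_Rbar E) 1).
  { apply Hlub. intros y [t [_ ->]]. simpl. apply Hf. }
  destruct (Lub_Rbar E) as [r| |] eqn:Er; simpl in H0, H1; try contradiction.
  simpl. pose proof (Hf (x - 1)).
  split; [lra|]. split.
  - intros t Ht. assert (Hl : Rbar_le (f t) r).
    { apply Hub. exists t. split; auto. }
    exact Hl.
  - intros b Hb. assert (Hl : Rbar_le r b).
    { apply Hlub. intros y [t [Ht ->]]. simpl. apply Hb; auto. }
    exact Hl.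
Qed.

Lemma sup_approx f x : (forall t, 0 <= f t <= 1) -> forall eps, 0 < eps ->
  exists t, t < x /\ sup_g f x - eps < f t.
Proof.
  intros Hf eps He. destruct (lub_props f x Hf) as [_ [_ H3]].
  destruct (classic (exists t, t < x /\ sup_g f x - eps < f t)) as [H|H]; auto.
  exfalso. assert (sup_g f x <= sup_g f x - eps); [|lra].
  apply H3. intros t Ht. destruct (Rle_or_lt (f t) (sup_g f x - eps)); auto.
  exfalso; apply H; eauto.
Qed.

Definition RA (f : R -> R) : dfun := fun x =>
  match x with
  | Finite r => if Rle_dec r 0 then 0 else sup_g f r
  | p_infty => 1
  | m_infty => 0
  end.

Section RAprops.
Variable f : R -> R.
Hypothesis Hf : forall t, 0 <= f t <= 1.
Hypothesis Hmono : forall x y, x <= y -> f x <= f y.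
Hypothesis Hneg : forall t, t < 0 -> f t = 0.
Hypothesis Hev : forall eps, 0 < eps -> exists X, forall t, X <= t -> 1 - eps <= f t.

Lemma RA_bnd x : 0 <= RA f x <= 1.
Proof.
  destruct x as [r| |]; simpl; try lra. destruct Rle_dec; [lra|].
  apply (lub_props f r Hf).
Qed.

Lemma RA_mono x y : x <= y -> RA f (Finite x) <= RA f (Finite y).
Proof.
  intros Hxy. destruct (Rle_dec x 0) as [Hx|Hx].
  - simpl. destruct (Rle_dec x 0); [|lra]. apply (RA_bnd (Finite y)).
  - simpl. destruct (Rle_dec x 0); [lra|]. destruct (Rle_dec y 0); [lra|].
    destruct (lub_props f x Hf) as [_ [_ H3]]. apply H3.
    intros t Ht. apply (lub_props f y Hf). lra.
Qed.

Lemma RA_left x : 0 <= x -> filterlim f (at_left x) (locally (RA f (Finite x))).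
Proof.
  intros Hx. apply lim_left. intros eps He. simpl.
  destruct (Rle_dec x 0) as [Hx0|Hx0].
  - exists 1. split; [lra|]. intros t Ht. rewrite Hneg by lra.
    replace (0 - 0) with 0 by ring. rewrite Rabs_R0; lra.
  - destruct (sup_approx f x Hf eps He) as [t0 [Ht0 Hs]].
    exists (x - t0). split; [lra|]. intros t Ht.
    destruct (lub_props f x Hf) as [_ [H2 _]].
    pose proof (H2 t (proj2 Ht)). pose proof (Hmono t0 t ltac:(lra)).
    apply Rabs_def1; lra.
Qed.

Lemma RA_leftcont x : filterlim (fun t => RA f (Finite t)) (at_left x) (locally (RA f (Finite x))).
Proof.
  apply lim_left. intros eps He.
  destruct (Rle_dec x 0) as [Hx0|Hx0].
  - exists 1. split; [lra|]. intros t Ht. simpl.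
    destruct (Rle_dec t 0), (Rle_dec x 0); try lra.
    replace (0 - 0) with 0 by ring. rewrite Rabs_R0; lra.
  - destruct (sup_approx f x Hf eps He) as [t0 [Ht0 Hs]].
    exists (x - Rmax t0 0). split; [apply Rmax_case; lra|]. intros t Ht.
    assert (t0 < t /\ 0 < t) as [Ht1 Ht2].
    { revert Ht. apply Rmax_case_strong; intros; lra. }
    pose proof (RA_mono t x ltac:(lra)).
    assert (f t0 <= RA f (Finite t)).
    { simpl. destruct (Rle_dec t 0); [lra|]. apply (lub_props f t Hf). lra. }
    revert Hs. simpl. destruct (Rle_dec x 0); [lra|]. intros Hs.
    simpl in H. destruct (Rle_dec x 0); [lra|].
    simpl in H0. destruct (Rle_dec t 0); [lra|]. apply Rabs_def1; lra.
Qed.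

Lemma RA_inf : filterlim (fun t => RA f (Finite t)) (Rbar_locally p_infty) (locally 1).
Proof.
  apply filterlim_locally. intros eps.
  destruct (Hev (eps / 2)) as [X HX]. { pose proof (cond_pos eps). lra. }
  exists (Rmax X 0 + 1). intros t Ht. apply ballR.
  pose proof (RA_bnd (Finite t)).
  assert (1 - eps / 2 <= RA f (Finite t)).
  { simpl. destruct (Rle_dec t 0). { pose proof (Rmax_r X 0). lra. }
    pose proof (HX (Rmax X 0) (Rmax_l X 0)).
    pose proof (proj1 (proj2 (lub_props f t Hf)) (Rmax X 0) ltac:(lra)). lra. }
  pose proof (cond_pos eps). apply Rabs_def1; lra.
Qed.

Lemma RA_Dplus : in_Dplus (RA f).
Proof.
  split; [split; [|split; [|split; [|split]]]|].
  - exact RA_bnd.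
  - intros [x| |] [y| |] Hxy; simpl in Hxy; try contradiction.
    + apply RA_mono; exact Hxy.
    + apply (RA_bnd (Finite x)).
    + simpl; lra.
    + apply (RA_bnd (Finite y)).
    + simpl; lra.
    + simpl; lra.
  - exact RA_leftcont.
  - simpl. destruct Rle_dec; lra.
  - reflexivity.
  - exact RA_inf.
Qed.

End RAprops.

Lemma plus_minus_cancel (V : ModuleSpace R_Ring) (a p : V) : plus (minus a p) p = a.
Proof. unfold minus. rewrite <- plus_assoc, plus_opp_l, plus_zero_r. reflexivity. Qed.

Definition lseq (n : nat) : R := / (INR n + 2).

Lemma lseq_bnd n : 0 < lseq n < 1.
Proof.
  unfold lseq. pose proof (pos_INR n). split.
  - apply Rinv_0_lt_compat; lra.
  - rewrite <- Rinv_1. apply Rinv_lt_contravar; lra.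
Qed.

Lemma lseq_small d : 0 < d -> exists N, forall n, (N <= n)%nat -> lseq n < d.
Proof.
  intros Hd. destruct (archimed_cor1 d Hd) as [N [HN HN0]]. exists N.
  intros n Hn. unfold lseq. apply Rle_lt_trans with (/ INR N); [|exact HN].
  apply Rinv_le_contravar. apply lt_0_INR; lia.
  apply le_INR in Hn. lra.
Qed.

Lemma tail_bound (V : ModuleSpace R_Ring) (nu : V -> dfun)
    (tau tau_star : dfun -> dfun -> dfun) :
  PN_space V nu tau tau_star ->
  (forall p : V, in_Dplus (nu p)) ->
  forall (pm : nat -> V) (p : V),
    strongly_converges V nu pm p ->
  forall eps, 0 < eps -> exists N X, forall m t, (N <= m)%nat -> X <= t ->
    1 - eps < nu (pm m) (Finite t).
Proof.
  intros [[TD [_ [Tcomm [Tmono Tunit]]]] [Tcont [_ [_ [_ [HD [_ [_ [N3 _]]]]]]]]]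
    HDp pm p Hsc eps He.
  destruct (Dplus_eventually _ (HDp p) (eps / 2)) as [M HM]; [lra|].
  set (x0 := Rmax M 0 + 1).
  assert (Hx0 : 1 <= x0 /\ M < x0).
  { unfold x0. pose proof (Rmax_l M 0). pose proof (Rmax_r M 0). lra. }
  set (c := nu p (Finite x0)).
  assert (Hc : 1 - eps / 2 < c) by (apply HM; lra).
  assert (Hcb : 0 <= c <= 1) by apply (Delta_bnd _ _ (HD p)).
  set (H := step x0 c).
  assert (HH : in_Delta H) by (apply step_Delta; lra).
  set (Gn := fun n => step (lseq n) (1 - lseq n)).
  assert (HGn : forall n, in_Delta (Gn n)).
  { intro n. pose proof (lseq_bnd n). apply step_Delta; lra. }
  assert (Heps0 : in_Delta eps0) by (rewrite eps0_step; apply step_Delta; lra).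
  assert (Hw1 : weak_cv Gn eps0).
  { intros x _. apply filterlim_locally. intros e.
    destruct (Rle_dec x 0) as [Hx|Hx].
    - exists 0%nat. intros n _. apply ballR. simpl.
      pose proof (lseq_bnd n).
      destruct (Rle_dec x (lseq n)); [|lra]. destruct (Rle_dec x 0); [|lra].
      replace (0 - 0) with 0 by ring. rewrite Rabs_R0. apply cond_pos.
    - destruct (lseq_small (Rmin x e)) as [N HN].
      { apply Rmin_case; [lra| apply cond_pos]. }
      exists N. intros n Hn. apply ballR. simpl. specialize (HN n Hn).
      pose proof (Rmin_l x e). pose proof (Rmin_r x e). pose proof (lseq_bnd n).
      destruct (Rle_dec x (lseq n)); [lra|]. destruct (Rle_dec x 0); [lra|].
      apply Rabs_def1; lra. }
  assert (Hw2 : weak_cv (fun _ => H) H).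
  { intros x _. apply filterlim_const. }
  pose proof (Tcont Gn (fun _ => H) eps0 H HGn (fun _ => HH) Heps0 HH Hw1 Hw2) as Hw.
  assert (HeH : forall y, tau eps0 H y = H y).
  { intro y. rewrite (Tcomm eps0 H Heps0 HH y). apply Tunit; auto. }
  assert (Hcont : continuous (fun t => tau eps0 H (Finite t)) (2 * x0)).
  { apply filterlim_locally. intros e. assert (Hp : 0 < x0) by lra.
    exists (mkposreal x0 Hp). intros t Ht. apply ballR.
    assert (Hb : Rabs (t - 2 * x0) < x0) by (apply (ballR (2 * x0) (mkposreal x0 Hp)); exact Ht).
    destruct (Rabs_def2 _ _ Hb).
    rewrite !HeH. simpl. destruct (Rle_dec t x0); [lra|]. destruct (Rle_dec (2 * x0) x0); [lra|].
    replace (c - c) with 0 by ring. rewrite Rabs_R0. apply cond_pos. }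
  destruct (lim_seq_get _ _ (Hw (2 * x0) Hcont) (eps / 2)) as [N0 HN0]; [lra|].
  specialize (HN0 N0 (Nat.le_refl _)).
  rewrite HeH in HN0. simpl in HN0. destruct (Rle_dec (2 * x0) x0) as [Hbad|_]; [lra|].
  destruct (Rabs_def2 _ _ HN0) as [_ Hlow].
  destruct (Hsc (lseq N0) (proj1 (lseq_bnd N0))) as [N1 HN1].
  exists N1, (2 * x0). intros m t Hm Ht.
  assert (HG : dle (Gn N0) (nu (minus (pm m) p))).
  { specialize (HN1 m Hm). pose proof (lseq_bnd N0).
    intros [r| |]; simpl.
    - destruct (Rle_dec r (lseq N0)).
      + apply (Delta_bnd _ _ (HD _)).
      + pose proof (Delta_mono _ (lseq N0) r (HD (minus (pm m) p)) ltac:(lra)). lra.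
    - rewrite (Delta_pinf _ (HD _)). lra.
    - apply (Delta_bnd _ _ (HD _)). }
  assert (HHp : dle H (nu p)).
  { intros [r| |]; simpl.
    - destruct (Rle_dec r x0).
      + apply (Delta_bnd _ _ (HD _)).
      + apply Delta_mono; [apply HD|lra].
    - rewrite (Delta_pinf _ (HD _)). lra.
    - apply (Delta_bnd _ _ (HD _)). }
  set (q := minus (pm m) p).
  assert (Hchain : tau (Gn N0) H (Finite (2 * x0)) <= nu (pm m) (Finite (2 * x0))).
  { eapply Rle_trans. apply (Tmono (Gn N0) (nu q) H (HGn N0) (HD q) HH HG).
    rewrite (Tcomm _ _ (HD q) HH).
    eapply Rle_trans. apply (Tmono H (nu p) (nu q) HH (HD p) (HD q) HHp).
    rewrite (Tcomm _ _ (HD p) (HD q)).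
    eapply Rle_trans. apply N3. unfold q. apply Req_le. f_equal. f_equal. apply plus_minus_cancel. }
  pose proof (Delta_mono _ (2 * x0) t (HD (pm m)) Ht). lra.
Qed.

Lemma prefix_bound (V : ModuleSpace R_Ring) (nu : V -> dfun) (pm : nat -> V) :
  (forall p : V, in_Dplus (nu p)) -> forall eps, 0 < eps -> forall N,
  exists X, forall m t, (m < N)%nat -> X <= t -> 1 - eps < nu (pm m) (Finite t).
Proof.
  intros HDp eps He N. induction N as [|N [X HX]].
  - exists 0. intros m t Hm. lia.
  - destruct (Dplus_eventually _ (HDp (pm N)) eps He) as [M HM].
    exists (Rmax X (M + 1)). intros m t Hm Ht.
    pose proof (Rmax_l X (M + 1)). pose proof (Rmax_r X (M + 1)).
    destruct (Nat.eq_dec m N) as [->|Hne].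
    + apply HM. lra.
    + apply HX; [lia|lra].
Qed.

Theorem theorem22 (V : ModuleSpace R_Ring) (nu : V -> dfun)
    (tau tau_star : dfun -> dfun -> dfun) :
  PN_space V nu tau tau_star ->
  (forall p : V, in_Dplus (nu p)) ->
  (forall F G, in_Dplus F -> in_Dplus G -> in_Dplus (tau F G)) ->
  forall (pm : nat -> V) (p : V),
    strongly_converges V nu pm p ->
    D_bounded V nu (fun q => exists m : nat, q = pm m).
Proof.
  intros HPN HDp _ pm p Hsc.
  assert (HD : forall q, in_Delta (nu q)) by (intro q; apply HDp).
  set (A := fun q => exists m : nat, q = pm m).
  assert (HA0 : A (pm 0%nat)) by (exists 0%nat; reflexivity).
  set (f := inf_nu V nu A).
  assert (Hf : forall t, 0 <= f t <= 1) by (intro t; apply (glb_props V nu A t _ HD HA0)).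
  assert (Hmono : forall x y, x <= y -> f x <= f y).
  { intros x y Hxy. apply (glb_props V nu A y _ HD HA0).
    intros q Hq. eapply Rle_trans. apply (proj1 (proj2 (glb_props V nu A x _ HD HA0))); exact Hq.
    apply Delta_mono; auto. }
  assert (Hneg : forall t, t < 0 -> f t = 0).
  { intros t Ht. pose proof (Hf t).
    pose proof (proj1 (proj2 (glb_props V nu A t _ HD HA0)) _ HA0).
    rewrite (Delta_nonpos _ t (HD _)) in H0 by lra. fold f in H0. lra. }
  assert (Hev : forall eps, 0 < eps -> exists X, forall t, X <= t -> 1 - eps <= f t).
  { intros eps He.
    destruct (tail_bound V nu tau tau_star HPN HDp pm p Hsc eps He) as [N [X1 H1]].
    destruct (prefix_bound V nu pm HDp eps He N) as [X2 H2].
    exists (Rmax X1 X2). intros t Ht.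
    pose proof (Rmax_l X1 X2). pose proof (Rmax_r X1 X2).
    apply (glb_props V nu A t _ HD HA0). intros q [m ->].
    destruct (Compare_dec.le_lt_dec N m).
    - left. apply H1; auto; lra.
    - left. apply H2; auto; lra. }
  split; [exists (pm 0%nat); exact HA0|].
  exists (RA f). split.
  - split; [|split; [|split]].
    + intros x Hx. apply RA_left; auto.
    + reflexivity.
    + intros x Hx. simpl. destruct (Rle_dec x 0); [reflexivity|lra].
    + reflexivity.
  - apply RA_Dplus; auto.
Qed.
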